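(* In any execution of the algorithm $\mathcal{A}$ described in the context, for any two processes $p_i$ and $p_j$, if $p_i$ writes a set $S_i$ to $Set[i]$ and $p_j$ writes a set $S_j$ to $Set[j]$, then $S_i\subseteq S_j$ or $S_j\subseteq S_i$.
   Context: Algorithm $\mathcal{A}$ (a safe agreement algorithm for processes $p_0,\dots,p_{m-1}$, each invoking $propose$ at most once). Shared single-writer registers, for $0\le i<m$, written only by $p_i$: $Val[i]$ (initially $\bot$), $Id[i]$ (initially $\bot$), $Set[i]$ (initially $\emptyset$). $propose(v)$ at $p_i$: write $Val[i]\gets v$; write $Id[i]\gets i$; repeat { read $Id[0],\dots,Id[m-1]$ in order into $collect1$; read $Id[0],\dots,Id[m-1]$ in order into $collect2$ } until $collect1=collect2$ componentwise; then write $Set[i]\gets\{j: collect1[j]\neq\bot\}$. $resolve()$ at $p_i$: read $Set[0],\dots,Set[m-1]$, let $C$ be the smallest non-empty set read; if for every $j\in C$ the value read from $Set[j]$ is non-empty and contains $C$, return $Val[\min C]$, else return $\bot$. Reads and writes of registers are atomic. *)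

(* Defs.v *)
From mathcomp Require Import all_boot all_order.
Set Implicit Arguments. Unset Strict Implicit. Unset Printing Implicit Defensive.

Section Model.
Variables (T : Type) (m : nat).

(* Local control state of a process running propose. A collect is the
   sequence of values read so far from Id[0], Id[1], ... (None = bottom). *)
Inductive pstate :=
| Idle
| PWVal of T                                         (* about to write Val[i] <- v *)
| PWId                                               (* about to write Id[i] <- i *)
| PColl1 of seq (option 'I_m)                        (* building collect1 *)
| PColl2 of seq (option 'I_m) & seq (option 'I_m)    (* collect1 done, building collect2 *)
| PWSet of seq (option 'I_m)                         (* about to write Set[i] *)
| PDone.

Record config := Config {
  local : 'I_m -> pstate;
  RVal : 'I_m -> option T;          (* Val[i], None = bottom *)
  RId  : 'I_m -> option 'I_m;       (* Id[i],  None = bottom *)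
  RSet : 'I_m -> {set 'I_m}
}.

Definition init : config :=
  Config (fun _ => Idle) (fun _ => None) (fun _ => None) (fun _ => set0).

Definition upd (A : Type) (f : 'I_m -> A) (i : 'I_m) (x : A) : 'I_m -> A :=
  fun j => if j == i then x else f j.

(* Events (one atomic shared-memory access, or the invocation of propose). *)
Inductive event :=
| EInvoke of T
| EWriteVal of T
| EWriteId
| EReadId of 'I_m & option 'I_m
| EWriteSet of {set 'I_m}.

Definition next1 (c : seq (option 'I_m)) : pstate :=
  if size c == m then PColl2 c [::] else PColl1 c.

Definition next2 (c1 c2 : seq (option 'I_m)) : pstate :=
  if size c2 == m then (if c1 == c2 then PWSet c1 else PColl1 [::])
  else PColl2 c1 c2.

Definition set_of_collect (c : seq (option 'I_m)) : {set 'I_m} :=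
  [set j : 'I_m | nth None c j != None].

Inductive step : config -> 'I_m -> event -> config -> Prop :=
| st_invoke C i v :
    local C i = Idle ->
    step C i (EInvoke v)
      (Config (upd (local C) i (PWVal v)) (RVal C) (RId C) (RSet C))
| st_wval C i v :
    local C i = PWVal v ->
    step C i (EWriteVal v)
      (Config (upd (local C) i PWId) (upd (RVal C) i (Some v)) (RId C) (RSet C))
| st_wid C i :
    local C i = PWId ->
    step C i EWriteId
      (Config (upd (local C) i (PColl1 [::])) (RVal C) (upd (RId C) i (Some i)) (RSet C))
| st_read1 C i c (k : 'I_m) :
    local C i = PColl1 c -> nat_of_ord k = size c ->
    step C i (EReadId k (RId C k))
      (Config (upd (local C) i (next1 (rcons c (RId C k)))) (RVal C) (RId C) (RSet C))
| st_read2 C i c1 c2 (k : 'I_m) :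
    local C i = PColl2 c1 c2 -> nat_of_ord k = size c2 ->
    step C i (EReadId k (RId C k))
      (Config (upd (local C) i (next2 c1 (rcons c2 (RId C k)))) (RVal C) (RId C) (RSet C))
| st_wset C i c :
    local C i = PWSet c ->
    step C i (EWriteSet (set_of_collect c))
      (Config (upd (local C) i PDone) (RVal C) (RId C)
              (upd (RSet C) i (set_of_collect c))).

Inductive exec : config -> seq ('I_m * event) -> Prop :=
| exec_nil : exec init [::]
| exec_snoc C tr i e C' :
    exec C tr -> step C i e C' -> exec C' (rcons tr (i, e)).

End Model.

(* Main.v *)
Require Import Defs.
From mathcomp Require Import all_boot all_order.
Set Implicit Arguments. Unset Strict Implicit. Unset Printing Implicit Defensive.

Section Proof.
Variables (T : Type) (m : nat).

Definition Wset (C : config T m) : {set 'I_m} := [set k | RId C k != None].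

Definition candp (ps : pstate T m) (R : {set 'I_m}) : {set 'I_m} :=
  match ps with
  | PColl1 c => set_of_collect c
  | PColl2 c _ => set_of_collect c
  | PWSet c => set_of_collect c
  | PDone => R
  | _ => set0
  end.

Definition Covp (ps : pstate T m) (R : {set 'I_m}) (K : {set 'I_m}) : Prop :=
  match ps with
  | PColl2 c1 c2 => forall k : 'I_m, k \in K ->
      nth None c1 k != None \/ size c2 <= k \/ nth None c2 k != None
  | PWSet c => K \subset set_of_collect c
  | PDone => K \subset R
  | _ => True
  end.

Definition cand (C : config T m) x := candp (local C x) (RSet C x).
Definition Cov (C : config T m) x K := Covp (local C x) (RSet C x) K.

Definition I1 C := forall x, cand C x \subset Wset C.
Definition I2 C := forall x y, Cov C y (cand C x) \/ Cov C x (cand C y).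
Definition I3 C (tr : seq ('I_m * event T m)) := forall k i S, k < size tr ->
  nth (i, EWriteSet T S) tr k = (i, EWriteSet T S) -> local C i = PDone T m /\ RSet C i = S.

Definition frame (C C' : config T m) p :=
  forall x, x != p -> local C' x = local C x /\ RSet C' x = RSet C x.

Lemma step_frame C p e C' : step C p e C' -> frame C C' p.
Proof.
move=> hs x hx; destruct hs; by rewrite /= /upd (negbTE hx).
Qed.

Lemma step_W C p e C' : step C p e C' -> Wset C \subset Wset C'.
Proof.
move=> hs; destruct hs => /=; apply/subsetP=> x; rewrite !inE /upd //.
by move=> h /=; case: ifP.
Qed.

Lemma step_notdone C p e C' : step C p e C' -> local C p <> PDone T m.
Proof. by move=> hs; destruct hs; match goal with H : local _ _ = _ |- _ => rewrite H end. Qed.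

Lemma I2_caseB C C' p : frame C C' p -> (forall K : {set 'I_m}, Cov C' p K) -> I2 C -> I2 C'.
Proof.
move=> fr hB h x y.
case: (eqVneq x p) => [->|hx]; first by right; apply: hB.
case: (eqVneq y p) => [->|hy]; first by left; apply: hB.
have [lx rx] := fr x hx; have [ly ry] := fr y hy.
by rewrite /Cov /cand lx rx ly ry; apply: h.
Qed.

Lemma I2_caseA C C' p : frame C C' p -> cand C' p = cand C p ->
  (forall K : {set 'I_m}, K \subset Wset C -> Cov C p K -> Cov C' p K) -> I1 C -> I2 C -> I2 C'.
Proof.
move=> fr hc hA h1 h x y.
case: (eqVneq x p) => [->|hx]; case: (eqVneq y p) => [->|hy].
- by left; rewrite hc; apply: hA; [apply: h1 | case: (h p p)].
- have [ly ry] := fr y hy.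
  case: (h p y) => H; first by left; rewrite hc /Cov ly ry.
  by right; have := hA _ (h1 y) H; rewrite /cand ly ry.
- have [lx rx] := fr x hx.
  case: (h x p) => H.
  + by left; have := hA _ (h1 x) H; rewrite /cand lx rx.
  + by right; rewrite hc /Cov lx rx.
- have [lx rx] := fr x hx; have [ly ry] := fr y hy.
  by rewrite /Cov /cand lx rx ly ry; apply: h.
Qed.

Lemma I1_step C C' p : frame C C' p -> Wset C \subset Wset C' ->
  cand C' p \subset Wset C' -> I1 C -> I1 C'.
Proof.
move=> fr hW hp h x; case: (eqVneq x p) => [->|hx] //.
have [lx rx] := fr x hx; rewrite /cand lx rx.
exact: subset_trans (h x) hW.
Qed.

Lemma soc_nil : @set_of_collect m [::] = set0.
Proof. by apply/setP=> j; rewrite !inE nth_nil. Qed.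

Lemma soc_rcons C c (k : 'I_m) : @set_of_collect m c \subset Wset C ->
  nat_of_ord k = size c -> @set_of_collect m (rcons c (RId C k)) \subset Wset C.
Proof.
move=> h hk; apply/subsetP=> j; rewrite inE nth_rcons.
case: ltnP => lt.
  by move=> hj; apply: (subsetP h); rewrite inE.
case: ifP => // /eqP ej; have -> : j = k by apply: val_inj; rewrite /= ej hk.
by rewrite inE.
Qed.

Lemma cov_read2 C c1 c2 (k0 : 'I_m) (R R' K : {set 'I_m}) : K \subset Wset C -> size c2 = k0 ->
  Covp (PColl2 T c1 c2) R K -> Covp (PColl2 T c1 (rcons c2 (RId C k0))) R' K.
Proof.
move=> hK hs H k kK; have [h|[h|h]] := H k kK; first by left.
- rewrite size_rcons nth_rcons.
  case: (ltngtP (size c2) k) => hk; first by right; left.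
  + by move: hk; rewrite ltnNge h.
  + right; right.
    have -> : k0 = k by apply: val_inj; rewrite /= -hs hk.
    by move: (subsetP hK k kK); rewrite inE.
- right; right; rewrite nth_rcons.
  case: ltnP => // hk; by move: h; rewrite nth_default.
Qed.

Lemma pres C tr p e C' : I1 C -> I2 C -> I3 C tr -> step C p e C' ->
  [/\ I1 C', I2 C' & I3 C' (rcons tr (p, e))].
Proof.
move=> h1 h2 h3 hs.
have fr := step_frame hs; have hW := step_W hs; have nd := step_notdone hs.
have I3' : (forall S, e = EWriteSet T S -> local C' p = PDone T m /\ RSet C' p = S) ->
    I3 C' (rcons tr (p, e)).
  move=> hnew k i S; rewrite size_rcons ltnS nth_rcons leq_eqVlt.
  case: ltnP => [lt _ hn|ge].
    have [li ri] := h3 _ _ _ lt hn.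
    have hip : i != p by apply/eqP=> eip; apply: nd; rewrite -eip.
    by have [-> ->] := fr i hip.
  rewrite orbF => /eqP -> ; rewrite eqxx => -[<- he].
  exact: hnew he.
case: hs h1 h2 h3 fr hW nd I3' => {C p e C'} C p.
- move=> v lp h1 h2 h3 fr hW _ I3'; split.
  + by apply: I1_step fr hW _ h1; rewrite /cand /= /upd eqxx /= sub0set.
  + by apply: I2_caseB fr _ h2 => K; rewrite /Cov /= /upd eqxx /=.
  + by apply: I3'.
- move=> v lp h1 h2 h3 fr hW _ I3'; split.
  + by apply: I1_step fr hW _ h1; rewrite /cand /= /upd eqxx /= sub0set.
  + by apply: I2_caseB fr _ h2 => K; rewrite /Cov /= /upd eqxx /=.
  + by apply: I3'.
- move=> lp h1 h2 h3 fr hW _ I3'; split.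
  + by apply: I1_step fr hW _ h1; rewrite /cand /= /upd eqxx /= soc_nil sub0set.
  + by apply: I2_caseB fr _ h2 => K; rewrite /Cov /= /upd eqxx /=.
  + by apply: I3'.
- move=> c k lp hk h1 h2 h3 fr hW _ I3'; split.
  + have := h1 p; rewrite /cand lp /= => hc.
    apply: I1_step fr hW _ h1; rewrite /cand /= /upd eqxx /next1.
    by case: ifP => _ /=; apply: soc_rcons.
  + apply: I2_caseB fr _ h2 => K; rewrite /Cov /= /upd eqxx /next1.
    by case: ifP => //= _ k' _; right; left.
  + by apply: I3'.
- move=> c1 c2 k lp hk h1 h2 h3 fr hW _ I3'.
  have hc1 := h1 p; rewrite /cand lp /= in hc1.
  have cv : forall K : {set 'I_m}, K \subset Wset C -> Cov C p K ->
      Covp (PColl2 T c1 (rcons c2 (RId C k))) (RSet C p) K.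
    by move=> K hK; rewrite /Cov lp; apply: cov_read2.
  rewrite /next2 in fr hW I3' *.
  move: fr hW I3'; case: ifP => hsz; [case: ifP => heq|] => fr hW I3'.
  + split.
    * by apply: I1_step fr hW _ h1; rewrite /cand /= /upd eqxx /=.
    * apply: I2_caseA fr _ _ h1 h2; first by rewrite /cand lp /= /upd eqxx.
      move=> K hK hC; rewrite /Cov /= /upd eqxx /=.
      apply/subsetP => j jK; rewrite inE.
      have [h|[h|h]] := cv K hK hC j jK => //.
        by move: h; rewrite (eqP hsz) leqNgt ltn_ord.
      by rewrite (eqP heq).
    * by apply: I3'.
  + split.
    * by apply: I1_step fr hW _ h1; rewrite /cand /= /upd eqxx /= soc_nil sub0set.
    * by apply: I2_caseB fr _ h2 => K; rewrite /Cov /= /upd eqxx /=.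
    * by apply: I3'.
  + split.
    * by apply: I1_step fr hW _ h1; rewrite /cand /= /upd eqxx /=.
    * apply: I2_caseA fr _ _ h1 h2; first by rewrite /cand lp /= /upd eqxx.
      by move=> K hK hC; rewrite /Cov /= /upd eqxx /=; apply: cv.
    * by apply: I3'.
- move=> c lp h1 h2 h3 fr hW _ I3'.
  have hc1 := h1 p; rewrite /cand lp /= in hc1.
  split.
  + by apply: I1_step fr hW _ h1; rewrite /cand /= /upd eqxx /=.
  + apply: I2_caseA fr _ _ h1 h2; first by rewrite /cand lp /= /upd eqxx.
    by move=> K _; rewrite /Cov lp /= /upd !eqxx.
  + apply: I3' => S [<-]; by rewrite /= /upd !eqxx.
Qed.

Lemma inv_exec C tr : exec C tr -> [/\ I1 C, I2 C & I3 C tr].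
Proof.
elim=> {C tr} [|C tr p e C' _ [h1 h2 h3] hs]; last exact: pres hs.
split.
- by move=> x; rewrite /cand /= sub0set.
- by move=> x y; left.
- by move=> k i S.
Qed.

End Proof.

Theorem lemma6 (T : Type) (m : nat) (C : config T m) (tr : seq ('I_m * event T m))
  (i j : 'I_m) (Si Sj : {set 'I_m}) (ki kj : nat) :
  exec C tr ->
  ki < size tr -> nth (i, EWriteSet T Si) tr ki = (i, EWriteSet T Si) ->
  kj < size tr -> nth (j, EWriteSet T Sj) tr kj = (j, EWriteSet T Sj) ->
  (Si \subset Sj) \/ (Sj \subset Si).
Proof.
move=> /inv_exec [_ h2 h3] hi ei hj ej.
have [li ri] := h3 _ _ _ hi ei; have [lj rj] := h3 _ _ _ hj ej.
have := h2 i j; rewrite /Cov /cand li lj /= ri rj.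
by case=> H; [left | right].
Qed.
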